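(* Let $k$ be an algebraically closed field of characteristic $0$. Every curve in a nonempty Zariski open subset of the moduli space of genus-$2$ curves over $k$ is isomorphic to a curve of the form $y^2=(x-v)(vx-1)(x^2-a_1)(x^2-a_2)$ with $a_1,a_2,v\in k$. Equivalently, for six points $P_1,\ldots,P_6$ of $\mathbf{P}^1(k)$ in general position, there is a coordinate $x$ on $\mathbf{P}^1$ in which the set $\{P_1,\ldots,P_6\}$ equals $\{x_1,-x_1,x_2,-x_2,v,1/v\}$ for some $x_1,x_2,v\in k$. *)

(* Defs.v *)
From HB Require Import structures.
From mathcomp Require Import all_boot all_order all_algebra.
Set Implicit Arguments. Unset Strict Implicit. Unset Printing Implicit Defensive.
Import Order.TTheory GRing.Theory.
Local Open Scope ring_scope.

Inductive pexpr (R : Type) (n : nat) : Type :=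
| PX : 'I_n -> pexpr R n
| PC : R -> pexpr R n
| PAdd : pexpr R n -> pexpr R n -> pexpr R n
| PMul : pexpr R n -> pexpr R n -> pexpr R n.

Fixpoint peval (R : pzRingType) (n : nat) (e : pexpr R n) (x : 'I_n -> R) : R :=
  match e with
  | PX i => x i
  | PC c => c
  | PAdd e1 e2 => peval e1 x + peval e2 x
  | PMul e1 e2 => peval e1 x * peval e2 x
  end.

(* P holds on a nonempty Zariski open subset of k^n: there is a polynomial f,
   not identically zero, such that P holds wherever f does not vanish.
   (Every nonempty Zariski open set contains a nonempty basic open D(f).) *)
Definition generic (R : pzRingType) (n : nat) (P : ('I_n -> R) -> Prop) : Prop :=
  exists f : pexpr R n,
    (exists x, peval f x != 0) /\ (forall x, peval f x != 0 -> P x).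

Definition moebius (F : fieldType) (a b c d : F) (x : F) : F := (a * x + b) / (c * x + d).

(* Main.v *)
Require Import Defs.
From HB Require Import structures.
From mathcomp Require Import all_boot all_order all_algebra.
From Stdlib Require Import Ring.
Import GRing.Theory.
Set Implicit Arguments.
Local Open Scope ring_scope.

Section AR.
Variables (R : Type) (rO rI : R) (radd rmul rsub : R -> R -> R) (ropp : R -> R).
Hypothesis Rth : ring_theory rO rI radd rmul rsub ropp (@eq R).
Add Ring ARr : Rth.
Local Notation "x +' y" := (radd x y) (at level 50, left associativity).
Local Notation "x -' y" := (rsub x y) (at level 50, left associativity).
Local Notation "x *' y" := (rmul x y) (at level 40, left associativity).
Local Notation GA p1 p2 p3 p4 := ((p1 +' p2) -' (p3 +' p4)).
Local Notation AL p1 p2 p3 p4 := (p1 *' p2 -' p3 *' p4).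
Local Notation BE p1 p2 p3 p4 := (p3 *' p4 *' (p1 +' p2) -' p1 *' p2 *' (p3 +' p4)).
Local Notation DD p1 p2 p3 p4 := (AL p1 p2 p3 p4 *' AL p1 p2 p3 p4 +' BE p1 p2 p3 p4 *' GA p1 p2 p3 p4).
Local Notation U p1 p2 p3 p4 r p := (GA p1 p2 p3 p4 *' p -' AL p1 p2 p3 p4 -' r).
Local Notation W p1 p2 p3 p4 r p := (GA p1 p2 p3 p4 *' p -' AL p1 p2 p3 p4 +' r).

Lemma ar_pair12 l p1 p2 p3 p4 r :
  l *' U p1 p2 p3 p4 r p2 *' W p1 p2 p3 p4 r p1 -' ropp (l *' U p1 p2 p3 p4 r p1) *' W p1 p2 p3 p4 r p2
  = l *' ((rI +' rI) *' (DD p1 p2 p3 p4 -' r *' r)).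
Proof. ring. Qed.
Lemma ar_pair34 l p1 p2 p3 p4 r :
  l *' U p1 p2 p3 p4 r p4 *' W p1 p2 p3 p4 r p3 -' ropp (l *' U p1 p2 p3 p4 r p3) *' W p1 p2 p3 p4 r p4
  = l *' ((rI +' rI) *' (DD p1 p2 p3 p4 -' r *' r)).
Proof. ring. Qed.
Lemma ar_inv l u4 u5 : l *' u5 *' (l *' u4) = (l *' l) *' (u4 *' u5).
Proof. ring. Qed.
Lemma ar_uw p1 p2 p3 p4 r p :
  U p1 p2 p3 p4 r p *' W p1 p2 p3 p4 r p =
  ((GA p1 p2 p3 p4 *' p -' AL p1 p2 p3 p4) *' (GA p1 p2 p3 p4 *' p -' AL p1 p2 p3 p4)
     -' DD p1 p2 p3 p4) +' (DD p1 p2 p3 p4 -' r *' r).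
Proof. ring. Qed.
Lemma ar_det l g a r :
  l *' g *' (r -' a) -' ropp (l *' (a +' r)) *' g = (rI +' rI) *' (l *' (g *' r)).
Proof. ring. Qed.
Lemma ar_lin l g a r p :
  l *' g *' p +' ropp (l *' (a +' r)) = l *' (g *' p -' a -' r).
Proof. ring. Qed.
Lemma ar_lin2 g a r p : g *' p +' (r -' a) = g *' p -' a +' r.
Proof. ring. Qed.
End AR.

Lemma kRth (k : comNzRingType) : @ring_theory k 0 1 +%R *%R (fun x y => x - y) -%R eq.
Proof.
split; [exact: add0r|exact: addrC|exact: addrA|exact: mul1r|exact: mulrC|exact: mulrA|exact: mulrDl|by []|exact: subrr].
Qed.

Lemma ksqrt (k : closedFieldType) (a : k) : exists r, r * r = a.
Proof.
have [x Hx] := @solve_monicpoly k 2 (fun i => if i == 0%N then a else 0) isT.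
exists x; rewrite -expr2 Hx big_ord_recr big_ord1 /= expr0 mulr1 mul0r addr0 //.
Qed.

Lemma intr_neq0_char0 (k : fieldType) (hchar : [pchar k] =i pred0) (z : int) :
  z != 0 -> z%:~R != 0 :> k.
Proof.
have H := iffLR (pcharf0P k) hchar.
case: z => n nz.
  by rewrite -pmulrn H; apply: contra nz => /eqP ->.
by rewrite NegzE intrN oppr_eq0 -pmulrn H.
Qed.

Definition psub (R : Type) n (m1 : R) (e1 e2 : pexpr R n) := PAdd e1 (PMul (@PC R n m1) e2).

Section FE.
Variables (R : Type) (m1 : R).
Definition ex (j : nat) (H : (j < 6)%N) := @PX R 6 (Ordinal H).
Definition fga := psub m1 (PAdd (@ex 0 isT) (@ex 1 isT)) (PAdd (@ex 2 isT) (@ex 3 isT)).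
Definition fal := psub m1 (PMul (@ex 0 isT) (@ex 1 isT)) (PMul (@ex 2 isT) (@ex 3 isT)).
Definition fbe := psub m1 (PMul (PMul (@ex 2 isT) (@ex 3 isT)) (PAdd (@ex 0 isT) (@ex 1 isT)))
   (PMul (PMul (@ex 0 isT) (@ex 1 isT)) (PAdd (@ex 2 isT) (@ex 3 isT))).
Definition fdd := PAdd (PMul fal fal) (PMul fbe fga).
Definition fg j H := let t := psub m1 (PMul fga (@ex j H)) fal in psub m1 (PMul t t) fdd.
Definition fexpr :=
  PMul (PMul (PMul (PMul (PMul (PMul (PMul fga fdd) (@fg 0 isT)) (@fg 1 isT)) (@fg 2 isT))
     (@fg 3 isT)) (@fg 4 isT)) (@fg 5 isT).
End FE.

Fixpoint pmapC (R S : Type) n (phi : R -> S) (e : pexpr R n) : pexpr S n :=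
  match e with
  | PX i => @PX S n i
  | PC c => @PC S n (phi c)
  | PAdd e1 e2 => PAdd (pmapC phi e1) (pmapC phi e2)
  | PMul e1 e2 => PMul (pmapC phi e1) (pmapC phi e2)
  end.

Lemma peval_intr (k : pzRingType) n (e : pexpr int n) (z : 'I_n -> int) :
  peval (pmapC (fun c : int => c%:~R : k) e) (fun i => (z i)%:~R) = (peval e z)%:~R.
Proof. by elim: e => //= e1 IH1 e2 IH2; rewrite ?intrD ?intrM IH1 IH2. Qed.

Lemma pevalM (R : pzRingType) n (e1 e2 : pexpr R n) x :
  peval (PMul e1 e2) x = peval e1 x * peval e2 x.
Proof. by []. Qed.

Lemma factor_ok (k : fieldType) (hchar : [pchar k] =i pred0)
  (e : forall R : Type, R -> pexpr R 6) (z : 'I_6 -> int) :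
  (forall (R S : Type) (phi : R -> S) m, pmapC phi (e R m) = e S (phi m)) ->
  peval (e int (-1)) z != 0 -> peval (e k (-1)) (fun i => (z i)%:~R) != 0.
Proof.
move=> He Hz.
have -> : (-1 : k) = (-1 : int)%:~R by rewrite intrN.
rewrite -He peval_intr; exact: intr_neq0_char0.
Qed.

Theorem mainTheorem6 (k : closedFieldType) (hchar : [pchar k] =i pred0) :
  generic (fun P : 'I_6 -> k =>
    exists (a b c d : k), a * d - b * c != 0 /\
      (forall i, c * P i + d != 0) /\
      exists (x1 x2 v : k), v != 0 /\
        [seq moebius a b c d (P i) | i <- enum 'I_6]
          =i [:: x1; - x1; x2; - x2; v; v^-1]).
Proof.
have two0 : (1 + 1 : k) != 0.
  have H : (2%:R : k) != 0 by rewrite (iffLR (pcharf0P k) hchar 2).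
  exact: H.
exists (fexpr (-1)); split.
  exists (fun i : 'I_6 => (((i : nat).+1)%:Z)%:~R).
  rewrite /fexpr !pevalM !mulf_eq0 !negb_or; repeat (apply/andP; split).
  - by apply: (@factor_ok k hchar (fun R m => @fga R m)) => //; vm_compute.
  - by apply: (@factor_ok k hchar (fun R m => @fdd R m)) => //; vm_compute.
  - by apply: (@factor_ok k hchar (fun R m => @fg R m 0 isT)) => //; vm_compute.
  - by apply: (@factor_ok k hchar (fun R m => @fg R m 1 isT)) => //; vm_compute.
  - by apply: (@factor_ok k hchar (fun R m => @fg R m 2 isT)) => //; vm_compute.
  - by apply: (@factor_ok k hchar (fun R m => @fg R m 3 isT)) => //; vm_compute.
  - by apply: (@factor_ok k hchar (fun R m => @fg R m 4 isT)) => //; vm_compute.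
  - by apply: (@factor_ok k hchar (fun R m => @fg R m 5 isT)) => //; vm_compute.
move=> P Hf.
pose p0 := P (@Ordinal 6 0 isT). pose p1 := P (@Ordinal 6 1 isT).
pose p2 := P (@Ordinal 6 2 isT). pose p3 := P (@Ordinal 6 3 isT).
pose p4 := P (@Ordinal 6 4 isT). pose p5 := P (@Ordinal 6 5 isT).
pose ga := p0 + p1 - (p2 + p3).
pose al := p0 * p1 - p2 * p3.
pose be := p2 * p3 * (p0 + p1) - p0 * p1 * (p2 + p3).
pose dd := al * al + be * ga.
pose g q := (ga * q - al) * (ga * q - al) - dd.
have Hf2 : ga * dd * g p0 * g p1 * g p2 * g p3 * g p4 * g p5 != 0.
  by move: Hf; rewrite /= !mulN1r.
rewrite !mulf_eq0 !negb_or in Hf2.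
case/andP: Hf2 => Hf2 hg5; case/andP: Hf2 => Hf2 hg4; case/andP: Hf2 => Hf2 hg3.
case/andP: Hf2 => Hf2 hg2; case/andP: Hf2 => Hf2 hg1; case/andP: Hf2 => Hf2 hg0.
case/andP: Hf2 => hga hdd.
have [r hr] := @ksqrt k dd.
have hr0 : r != 0 by apply: contraNneq hdd => r0; rewrite -hr r0 mul0r.
pose u q := ga * q - al - r.
pose w q := ga * q - al + r.
have huw q : g q != 0 -> (u q != 0) && (w q != 0).
  move=> hq.
  have E : u q * w q = g q + (dd - r * r) := ar_uw (kRth k) p0 p1 p2 p3 r q.
  by move: E; rewrite hr subrr addr0 => E; move: hq; rewrite -E mulf_eq0 negb_or.
case/andP: (huw _ hg0) => hu0 hw0; case/andP: (huw _ hg1) => hu1 hw1.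
case/andP: (huw _ hg2) => hu2 hw2; case/andP: (huw _ hg3) => hu3 hw3.
case/andP: (huw _ hg4) => hu4 hw4; case/andP: (huw _ hg5) => hu5 hw5.
have [l hl] := @ksqrt k (w p4 * w p5 / (u p4 * u p5)).
have hl0 : l != 0.
  apply: contraTneq isT => l0; move: hl; rewrite l0 mul0r => /esym/eqP.
  by rewrite !mulf_eq0 invr_eq0 !mulf_eq0 (negbTE hw4) (negbTE hw5) (negbTE hu4) (negbTE hu5).
have hw q : ga * q + (r - al) = w q := ar_lin2 (kRth k) ga al r q.
have hm q : moebius (l * ga) (- (l * (al + r))) ga (r - al) q = l * u q / w q.
  rewrite /moebius hw.
  have -> : l * ga * q + - (l * (al + r)) = l * u q := ar_lin (kRth k) l ga al r q.
  by [].
exists (l * ga), (- (l * (al + r))), ga, (r - al); split.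
  have -> : l * ga * (r - al) - - (l * (al + r)) * ga = (1 + 1) * (l * (ga * r))
    := ar_det (kRth k) l ga al r.
  by rewrite !mulf_neq0.
split.
  case => [[|[|[|[|[|[|//]]]]]] Hi]; rewrite (eq_irrelevance Hi isT) hw.
  - exact: hw0.
  - exact: hw1.
  - exact: hw2.
  - exact: hw3.
  - exact: hw4.
  - exact: hw5.
exists (l * u p0 / w p0), (l * u p2 / w p2), (l * u p4 / w p4); split.
  by rewrite !mulf_neq0 ?invr_eq0.
have Een : enum 'I_6 = [:: @Ordinal 6 0 isT; @Ordinal 6 1 isT; @Ordinal 6 2 isT;
    @Ordinal 6 3 isT; @Ordinal 6 4 isT; @Ordinal 6 5 isT].
  by apply: (inj_map val_inj); rewrite val_enum_ord.
rewrite Een /= !hm.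
have h01 : l * u p1 / w p1 = - (l * u p0 / w p0).
  rewrite -mulNr; apply/eqP; rewrite eqr_div // -subr_eq0.
  have -> : l * u p1 * w p0 - - (l * u p0) * w p1 = l * ((1 + 1) * (dd - r * r))
    := ar_pair12 (kRth k) l p0 p1 p2 p3 r.
  by rewrite hr subrr !mulr0.
have h23 : l * u p3 / w p3 = - (l * u p2 / w p2).
  rewrite -mulNr; apply/eqP; rewrite eqr_div // -subr_eq0.
  have -> : l * u p3 * w p2 - - (l * u p2) * w p3 = l * ((1 + 1) * (dd - r * r))
    := ar_pair34 (kRth k) l p0 p1 p2 p3 r.
  by rewrite hr subrr !mulr0.
have h45 : l * u p5 / w p5 = (l * u p4 / w p4)^-1.
  rewrite invf_div; apply/eqP; rewrite eqr_div ?mulf_neq0 //.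
  have -> : l * u p5 * (l * u p4) = (l * l) * (u p4 * u p5) := ar_inv (kRth k) l (u p4) (u p5).
  by rewrite hl divfK ?mulf_neq0.
by rewrite h01 h23 h45.
Qed.
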